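(* Let $f_1,f_2,\ldots,f_{KN}$ be drawn i.i.d. from a distribution $\mathcal{F}$ over types, and for $i\in[K]$ let $\widehat{p}(\mathbf{b}^{(i)})=\frac1N\sum_{\tau=1}^N\mathbb{1}\{b_{f_{(i-1)N+\tau}}(\mathbf{x}^{(\mathbf{b}^{(i)})})=a^{(\mathbf{b}^{(i)})}\}$ (so the estimates for different $i$ use disjoint rounds). For $\mathbf{w}\in\mathcal{W}$ define $\widehat{p}(\mathbf{w})=\sum_{i=1}^K\lambda_i(\mathbf{w})\widehat{p}(\mathbf{b}^{(i)})$. Then for every $\sigma\in\Sigma$ and $a_f\in\mathcal{A}_f$, $\mathrm{Var}\big(\widehat{p}(\mathbb{1}_{(\sigma=a_f)})\big)\le\frac{K}{N}$.
   Context: Finite leader actions $\mathcal{A}$, finite follower actions $\mathcal{A}_f$, follower types $\alpha^{(1)},\ldots,\alpha^{(K)}$ with context-independent utilities $u_{\alpha^{(i)}}:\mathcal{A}\times\mathcal{A}_f\to[0,1]$; for $\mathbf{x}\in\Delta(\mathcal{A})$, $b_f(\mathbf{x})\in\arg\max_{a_f}\sum_{a_l}\mathbf{x}[a_l]u_f(a_l,a_f)$, ties broken by a fixed ordering. $\sigma^{(\mathbf{x})}$ maps $\alpha^{(i)}\mapsto b_{\alpha^{(i)}}(\mathbf{x})$, $\Sigma=\{\sigma^{(\mathbf{x})}:\mathbf{x}\in\Delta(\mathcal{A})\}$. For $\sigma\in\Sigma$, $a_f\in\mathcal{A}_f$, $\mathbb{1}_{(\sigma=a_f)}\in\{0,1\}^K$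 has $i$-th entry $\mathbb{1}\{\sigma(\alpha^{(i)})=a_f\}$, and $\mathcal{W}$ is the set of all such vectors. $\mathcal{B}=\{\mathbf{b}^{(1)},\ldots,\mathbf{b}^{(K)}\}\subseteq\mathcal{W}$ is a barycentric spanner: each $\mathbf{w}\in\mathcal{W}$ equals $\sum_i\lambda_i(\mathbf{w})\mathbf{b}^{(i)}$ with $\lambda_i(\mathbf{w})\in[-1,1]$. For each $\mathbf{b}\in\mathcal{B}$, $\mathbf{x}^{(\mathbf{b})}$, $a^{(\mathbf{b})}$ satisfy $\mathbf{b}=\mathbb{1}_{(\sigma^{(\mathbf{x}^{(\mathbf{b})})}=a^{(\mathbf{b})})}$. *)

(* Defs.v *)
From mathcomp Require Import all_boot all_order all_algebra.
Set Implicit Arguments. Unset Strict Implicit. Unset Printing Implicit Defensive.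
Import Order.TTheory GRing.Theory Num.Theory.
Local Open Scope ring_scope.

Section Game.
Variables (R : realFieldType) (AL AF : finType) (K : nat).

Definition in_simplex (x : {ffun AL -> R}) : Prop :=
  (forall a, 0 <= x a) /\ \sum_a x a = 1.

Definition expU (uf : AL -> AF -> R) (x : {ffun AL -> R}) (af : AF) : R :=
  \sum_al x al * uf al af.

Definition is_br (uf : AL -> AF -> R) (x : {ffun AL -> R}) (af : AF) : bool :=
  [forall af', expU uf x af' <= expU uf x af].

(* best response b_f(x): the first maximiser in the fixed ordering enum AF
   (a0 is only a dummy default, never used since a maximiser always exists) *)
Definition br (a0 : AF) (uf : AL -> AF -> R) (x : {ffun AL -> R}) : AF :=
  nth a0 [seq af <- enum AF | is_br uf x af] 0.

Definition sigma_of (a0 : AF) (u : 'I_K -> AL -> AF -> R) (x : {ffun AL -> R})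
  : {ffun 'I_K -> AF} := [ffun i => br a0 (u i) x].

Definition in_Sigma a0 u (s : {ffun 'I_K -> AF}) : Prop :=
  exists x, in_simplex x /\ s = sigma_of a0 u x.

Definition indv (s : {ffun 'I_K -> AF}) (af : AF) : {ffun 'I_K -> R} :=
  [ffun i => (s i == af)%:R].

Definition in_W a0 u (w : {ffun 'I_K -> R}) : Prop :=
  exists s af, in_Sigma a0 u s /\ w = indv s af.

Definition barycentric_spanner a0 u (b : 'I_K -> {ffun 'I_K -> R})
  (lam : {ffun 'I_K -> R} -> 'I_K -> R) : Prop :=
  (forall i, in_W a0 u (b i)) /\
  forall w, in_W a0 u w ->
    (forall i, -1 <= lam w i <= 1) /\ (forall j, w j = \sum_i lam w i * b i j).

Definition prob_vec (p : 'I_K -> R) : Prop :=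
  (forall i, 0 <= p i) /\ \sum_i p i = 1.

(* i.i.d. sampling of M follower types: sample space {ffun 'I_M -> 'I_K} *)
Definition weight (M : nat) (p : 'I_K -> R) (s : {ffun 'I_M -> 'I_K}) : R :=
  \prod_t p (s t).

Definition Expect (M : nat) (p : 'I_K -> R) (X : {ffun 'I_M -> 'I_K} -> R) : R :=
  \sum_s weight p s * X s.

Definition Var (M : nat) (p : 'I_K -> R) (X : {ffun 'I_M -> 'I_K} -> R) : R :=
  Expect p (fun s => (X s - Expect p X) ^+ 2).

(* hat p(b^(i)) computed from rounds i*N, ..., i*N + N - 1 (0-indexed) *)
Definition phat_b a0 (u : 'I_K -> AL -> AF -> R) (xb : 'I_K -> {ffun AL -> R})
  (ab : 'I_K -> AF) (N : nat) (i : 'I_K) (s : {ffun 'I_(K * N) -> 'I_K}) : R :=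
  N%:R^-1 * \sum_(t : 'I_(K * N) | (t %/ N)%N == val i)
              (br a0 (u (s t)) (xb i) == ab i)%:R.

Definition phat a0 u xb ab N (lam : {ffun 'I_K -> R} -> 'I_K -> R)
  (w : {ffun 'I_K -> R}) (s : {ffun 'I_(K * N) -> 'I_K}) : R :=
  \sum_i lam w i * @phat_b a0 u xb ab N i s.

End Game.

Arguments indv {R AF K} s af.
Arguments phat {R AL AF K} a0 u xb ab N lam w s.

(* Main.v *)
Require Import Defs.
From mathcomp Require Import all_boot all_order all_algebra.
From mathcomp Require Import ring lra.
Import Order.TTheory GRing.Theory Num.Theory.
Local Open Scope ring_scope.

Section G.
Variables (R : realFieldType) (K M : nat) (p : 'I_K -> R).
Hypothesis hp : prob_vec p.

Lemma Expect_ext (X Y : {ffun 'I_M -> 'I_K} -> R) : X =1 Y -> Expect p X = Expect p Y.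
Proof. by move=> h; apply: eq_bigr => s _; rewrite h. Qed.

Lemma Var_ext (X Y : {ffun 'I_M -> 'I_K} -> R) : X =1 Y -> Var p X = Var p Y.
Proof.
move=> h; rewrite /Var (Expect_ext _ _ h); apply: Expect_ext => s; by rewrite h.
Qed.

Lemma Expect_sum (I : finType) (F : I -> {ffun 'I_M -> 'I_K} -> R) :
  Expect p (fun s => \sum_j F j s) = \sum_j Expect p (F j).
Proof.
rewrite /Expect (eq_bigr (fun s => \sum_j weight p s * F j s)); last first.
  by move=> s _; rewrite mulr_sumr.
by rewrite exchange_big.
Qed.

Lemma Expect_prod (q : 'I_M -> 'I_K -> R) :
  Expect p (fun s => \prod_t q t (s t)) = \prod_t \sum_k p k * q t k.
Proof.
rewrite bigA_distr_bigA /Expect /weight; apply: eq_bigr => s _.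
by rewrite -big_split.
Qed.

Lemma Expect1 (t : 'I_M) (f : 'I_K -> R) :
  Expect p (fun s => f (s t)) = \sum_k p k * f k.
Proof.
have h1 : \prod_(τ < M | τ != t) \sum_k p k * (if τ == t then f else fun _ => 1) k = 1.
  by rewrite big1 // => τ /negbTE ->; rewrite (eq_bigr p) ?hp.2 // => k _; rewrite mulr1.
have := Expect_prod (fun τ => if τ == t then f else fun _ => 1).
rewrite (bigD1 t) //= h1 eqxx mulr1.
move=> <-; apply: Expect_ext => s.
by rewrite (bigD1 t) //= eqxx big1 ?mulr1 // => τ /negbTE ->.
Qed.

Lemma Expect2 (t t' : 'I_M) (f g : 'I_K -> R) : t != t' ->
  Expect p (fun s => f (s t) * g (s t')) = (\sum_k p k * f k) * (\sum_k p k * g k).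
Proof.
move=> ne.
set q := fun τ => if τ == t then f else if τ == t' then g else fun _ => 1.
have h1 : \prod_τ \sum_k p k * q τ k = (\sum_k p k * f k) * (\sum_k p k * g k).
  rewrite (eq_bigr (fun τ => if τ == t then \sum_k p k * f k else
      if τ == t' then \sum_k p k * g k else 1)); last first.
    move=> τ _; rewrite /q; case: ifP => // _; case: ifP => // _.
    by rewrite (eq_bigr p) ?hp.2 // => k _; rewrite mulr1.
  have ne' : t' != t by rewrite eq_sym.
  rewrite (bigD1 t) // (bigD1 t') ?ne' // [\big[_/_]_(i | true && _ && _) _]big1 /= ?mulr1 ?eqxx ?ne' ?(negbTE ne) ?(negbTE ne') //.
  by move=> τ /andP[/negbTE -> /negbTE ->].
rewrite -h1 -Expect_prod; apply: Expect_ext => s.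
have ne' : t' != t by rewrite eq_sym.
rewrite (bigD1 t) // (bigD1 t') ?ne' // [\big[_/_]_(i | true && _ && _) _]big1 /= ?mulr1 /q ?eqxx ?(negbTE ne) ?(negbTE ne') //.
by move=> τ /andP[/negbTE -> /negbTE ->].
Qed.

Lemma Var_gen (c : 'I_M -> R) (G : 'I_M -> 'I_K -> R)
  (hG : forall t k, 0 <= G t k <= 1) :
  Var p (fun s => \sum_t c t * G t (s t)) <= \sum_t c t ^+ 2.
Proof.
set mu := fun t => \sum_k p k * G t k.
have mu01 t : 0 <= mu t <= 1.
  apply/andP; split; first by apply: sumr_ge0 => k _; rewrite mulr_ge0 ?hp.1 ?(andP (hG t k)).1.
  rewrite -hp.2; apply: ler_sum => k _; rewrite ler_piMr ?hp.1 //.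
  exact: (andP (hG t k)).2.
have EX : Expect p (fun s => \sum_t c t * G t (s t)) = \sum_t c t * mu t.
  rewrite Expect_sum; apply: eq_bigr => t _.
  rewrite (Expect1 t (fun k => c t * G t k)) /mu mulr_sumr.
  by apply: eq_bigr => k _; rewrite mulrCA.
set D := fun t k => c t * (G t k - mu t).
have D0 t : \sum_k p k * D t k = 0.
  rewrite /D (eq_bigr (fun k => c t * (p k * G t k) - c t * mu t * p k)); last first.
    by move=> k _; ring.
  by rewrite sumrB -mulr_sumr -mulr_sumr hp.2 mulr1 subrr.
rewrite /Var EX.
rewrite (@Expect_ext _ (fun s => \sum_t \sum_t' D t (s t) * D t' (s t'))); last first.
  move=> s; rewrite expr2 -sumrB.
  rewrite (eq_bigr (fun t => D t (s t))); last by move=> t _; rewrite /D mulrBr.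
  by rewrite mulr_suml; apply: eq_bigr => t _; rewrite mulr_sumr.
rewrite Expect_sum; apply: ler_sum => t _.
rewrite Expect_sum (bigD1 t) //= big1 ?addr0; last first.
  by move=> t' ne; rewrite Expect2 1?eq_sym // D0 mul0r.
rewrite (Expect1 t (fun k => D t k * D t k)).
apply: le_trans (_ : \sum_k p k * c t ^+ 2 <= _); last by rewrite -mulr_suml hp.2 mul1r.
apply: ler_sum => k _; apply: ler_wpM2l; first exact: hp.1.
rewrite /D -expr2 exprMn ler_piMr ?sqr_ge0 //.
have /andP[g0 g1] := hG t k; have /andP[m0 m1] := mu01 t.
nra.
Qed.
End G.

Lemma ix_proof (K N : nat) (hN : (0 < N)%N) (t : 'I_(K * N)) : (t %/ N < K)%N.
Proof. by rewrite ltn_divLR. Qed.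

Definition ix (K N : nat) (hN : (0 < N)%N) (t : 'I_(K * N)) : 'I_K :=
  Ordinal (@ix_proof K N hN t).
Arguments ix {K N} hN t.

Theorem mainTheorem9 (R : realFieldType) (AL AF : finType) (K N : nat) (a0 : AF)
  (u : 'I_K -> AL -> AF -> R)
  (hu : forall i al af, 0 <= u i al af <= 1)
  (b : 'I_K -> {ffun 'I_K -> R}) (lam : {ffun 'I_K -> R} -> 'I_K -> R)
  (hB : barycentric_spanner a0 u b lam)
  (xb : 'I_K -> {ffun AL -> R}) (ab : 'I_K -> AF)
  (hxb : forall i, in_simplex (xb i) /\ b i = indv (sigma_of a0 u (xb i)) (ab i))
  (p : 'I_K -> R) (hp : prob_vec p)
  (hN : (0 < N)%N)
  (sg : {ffun 'I_K -> AF}) (hsg : in_Sigma a0 u sg) (af : AF) :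
  Var p (phat a0 u xb ab N lam (indv sg af)) <= K%:R / N%:R.
Proof.
set w := indv sg af.
have hlam : forall i, -1 <= lam w i <= 1.
  by apply: (proj1 (hB.2 w _)); exists sg, af.
set c := fun t : 'I_(K * N) => lam w (ix hN t) * N%:R^-1.
set G := fun (t : 'I_(K * N)) (k : 'I_K) =>
  (br a0 (u k) (xb (ix hN t)) == ab (ix hN t))%:R : R.
have eqX : phat a0 u xb ab N lam w =1 (fun s => \sum_t c t * G t (s t)).
  move=> s; rewrite /phat /phat_b.
  rewrite (eq_bigr (fun i => \sum_(t : 'I_(K * N))
     (if (t %/ N)%N == val i then lam w i * N%:R^-1 *
        (br a0 (u (s t)) (xb i) == ab i)%:R else 0))); last first.
    by move=> i _; rewrite mulrA mulr_sumr big_mkcond.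
  rewrite exchange_big; apply: eq_bigr => t _.
  rewrite -big_mkcond (big_pred1 (ix hN t)) //.
rewrite (@Var_ext _ _ _ p _ _ eqX).
apply: le_trans (@Var_gen _ _ _ p hp c G _) _.
  by move=> t k; rewrite /G; case: (_ == _); rewrite ?ler01 ?lexx.
have hN' : (N%:R : R) != 0 by rewrite pnatr_eq0 -lt0n.
apply: le_trans (_ : \sum_(t : 'I_(K * N)) N%:R^-2 <= _).
  apply: ler_sum => t _; rewrite /c exprMn.
  have := hlam (ix hN t); move=> /andP[l0 l1].
  rewrite exprVn -[X in _ <= X]mul1r ler_wpM2r ?invr_ge0 ?exprn_ge0 ?ler0n //.
  nra.
rewrite sumr_const card_ord -[_ *+ (K * N)]mulr_natr natrM.
rewrite le_eqVlt; apply/orP; left; apply/eqP; field.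
exact: hN'.
Qed.
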